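(* In the setting below, fix a test query $\mathbf q\in\mathbb{R}^d$, a stopping step $\hat N\ge1$ and two tokens $h,h'\in\mathcal H$. Suppose that there exist a vector $\boldsymbol\mu^{(0)}$ (the common initialization, $\boldsymbol\mu^{(0)}_g=\boldsymbol\mu^{(0)}$ for all $g$), vectors $\mathbf r_h,\mathbf r_{h'}$ and $\xi\ge0$ with $\|\mathbf r_h\|,\|\mathbf r_{h'}\|\le\xi$ such that $$\mathbb E\big[\boldsymbol\mu^{(\hat N)}_g\big]=\boldsymbol\mu^{(0)}+\frac{\eta\hat N p_g}{\sqrt d}(\mathbf w_g-\bar{\mathbf w})+\mathbf r_g\qquad (g\in\{h,h'\}).$$ Define $$\mathrm{AR}(h,h')=\frac{\mathbb E\big[M_h(\mathbf q;\boldsymbol\mu^{(\hat N)})/M_{h'}(\mathbf q;\boldsymbol\mu^{(\hat N)})\big]}{p_h/p_{h'}},$$ the expectation being over the training randomness. Then $$\mathrm{AR}(h,h')\ \ge\ \exp\Big(\frac{\eta\hat N}{d}\big\langle\mathbf q,\ p_h(\mathbf w_h-\bar{\mathbf w})-p_{h'}(\mathbf w_{h'}-\bar{\mathbf w})\big\rangle-\frac{2\xi\|\mathbf q\|}{\sqrt d}\Big).$$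
   Context: Let $\mathcal H$ be a finite set of tokens and $T\ge1$. Each history position $j\in[T]$ carries a token $h_j\in\mathcal H$; let $S_h=\{j\in[T]:h_j=h\}$, assume $|S_h|\ge1$ for all $h$, and let $p_h=|S_h|/T$. Each token $h$ has a key parameter $\boldsymbol\mu_h\in\mathbb{R}^d$, and the token exposure for a query $\mathbf q\in\mathbb{R}^d$ is $M_h(\mathbf q;\boldsymbol\mu)=\frac{|S_h|\exp(\langle\mathbf q,\boldsymbol\mu_h\rangle/\sqrt d)}{\sum_{h''\in\mathcal H}|S_{h''}|\exp(\langle\mathbf q,\boldsymbol\mu_{h''}\rangle/\sqrt d)}$. Training pairs $(\mathbf q^{(n)},X^{(n)})_{n\ge0}$ are i.i.d., with $\|\mathbf q^{(n)}\|\le B_q$ almost surely, $\Pr(X^{(n)}=h)=p_h$, $\mathbf w_h=\mathbb E[\mathbf q^{(n)}\mid X^{(n)}=h]$ and $\bar{\mathbf w}=\sum_h p_h\mathbf w_h$. The parameters $\boldsymbol\mu^{(n)}$ are produced by SGD with learning rate $\eta>0$ on the loss $-\log M_{X^{(n)}}(\mathbf q^{(n)};\boldsymbol\mu^{(n)})$, starting from a common initialization; $\boldsymbol\mu^{(\hat N)}$ is the (random) iterate at step $\hat N$. *)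

(* Defs.v *)
From HB Require Import structures.
From mathcomp Require Import all_boot all_order all_algebra.
From mathcomp Require Import all_classical all_reals all_analysis.
Set Implicit Arguments. Unset Strict Implicit. Unset Printing Implicit Defensive.
Import Order.TTheory GRing.Theory Num.Theory.
Local Open Scope classical_set_scope.
Local Open Scope ring_scope.

Section Defs.
Variable R : realType.
Variable d : nat.

Definition dotv (u v : 'rV[R]_d) : R := \sum_(i < d) u 0 i * v 0 i.
Definition vnorm (u : 'rV[R]_d) : R := Num.sqrt (dotv u u).

Variable H : finType.
Variable T : nat.
Variable hist : 'I_T -> H.

Definition cnt (g : H) : nat := #|[set j : 'I_T | hist j == g]|.
Definition pfreq (g : H) : R := (cnt g)%:R / T%:R.

Definition expo_num (q : 'rV[R]_d) (mu : H -> 'rV[R]_d) (g : H) : R :=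
  (cnt g)%:R * expR (dotv q (mu g) / Num.sqrt d%:R).
Definition exposure (q : 'rV[R]_d) (mu : H -> 'rV[R]_d) (g : H) : R :=
  expo_num q mu g / \sum_(g'' : H) expo_num q mu g''.

Variables (dm : measure_display) (Omega : measurableType dm).
Variable P : probability Omega R.
Variable qs : nat -> Omega -> 'rV[R]_d.
Variable X : nat -> Omega -> H.

(* SGD with learning rate eta on the loss -log M_{X^(n)}(q^(n); mu^(n)),
   from the common initialization mu0.  The gradient of this loss with
   respect to mu_g is  -(1[g = X^(n)] - M_g(q^(n); mu^(n))) q^(n) / sqrt d. *)
Fixpoint sgd (eta : R) (mu0 : 'rV[R]_d) (n : nat) (w : Omega) : H -> 'rV[R]_d :=
  match n with
  | 0 => fun _ => mu0
  | n'.+1 =>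
      let mu := sgd eta mu0 n' w in
      fun g => mu g + (eta / Num.sqrt d%:R *
                 ((X n' w == g)%:R - exposure (qs n' w) mu g)) *: qs n' w
  end.

(* Events generating sigma(q^(n), X^(n)) *)
Definition sample_gen (n : nat) : set (set Omega) :=
  [set A | (exists i : 'I_d, exists B : set R,
              measurable B /\ A = [set w | B (qs n w 0 i)])
           \/ (exists g : H, A = [set w | X n w = g])].

Definition pairs_independent : Prop :=
  forall (J : seq nat) (E : nat -> set Omega), uniq J ->
    (forall n, n \in J -> <<s sample_gen n >> (E n)) ->
    P (\big[setI/setT]_(n <- J) E n) = (\prod_(n <- J) P (E n))%E.

(* "the pairs (q^(n), X^(n)) are identically distributed": their joint laws
   agree on the pi-system of measurable rectangles {X = g} x prod_i B_i. *)
Definition rect_event (n : nat) (g : H) (B : 'I_d -> set R) : set Omega :=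
  [set w | X n w = g /\ forall i, B i (qs n w 0 i)].
Definition pairs_ident_distr : Prop :=
  forall n g (B : 'I_d -> set R), (forall i, measurable (B i)) ->
    P (rect_event n g B) = P (rect_event 0 g B).

Definition training_setup (Bq : R) : Prop :=
  (forall n (i : 'I_d), measurable_fun setT (fun w => qs n w 0 i)) /\
  (forall n g, measurable [set w | X n w = g]) /\
  pairs_independent /\ pairs_ident_distr /\
  (forall n, {ae P, forall w, vnorm (qs n w) <= Bq}) /\
  (forall n g, P [set w | X n w = g] = (pfreq g)%:E).

(* w_g = E[q^(n) | X^(n) = g] = E[q^(n) 1{X^(n)=g}] / Pr(X^(n) = g) *)
Definition wvec (g : H) : 'rV[R]_d :=
  \row_i ((\int[P]_(w in [set w | X 0 w = g]) qs 0 w 0 i)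
            / fine (P [set w | X 0 w = g])).
Definition wbar : 'rV[R]_d := \sum_(g : H) pfreq g *: wvec g.

Definition Emu (eta : R) (mu0 : 'rV[R]_d) (n : nat) (g : H) : 'rV[R]_d :=
  \row_i (\int[P]_w (sgd eta mu0 n w g 0 i)).

Definition AR (eta : R) (mu0 : 'rV[R]_d) (Nhat : nat) (q : 'rV[R]_d)
    (h h' : H) : \bar R :=
  ('E_P[fun w => (exposure q (sgd eta mu0 Nhat w) h /
                  exposure q (sgd eta mu0 Nhat w) h')%R] *
   ((pfreq h / pfreq h')^-1)%:E)%E.

End Defs.

(* Main.v *)
Require Import Defs.
From HB Require Import structures.
From mathcomp Require Import all_boot all_order all_algebra.
From mathcomp Require Import all_classical all_reals all_analysis.
From mathcomp Require Import ring lra measurable_realfun.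
Import Order.TTheory GRing.Theory Num.Theory.
Local Open Scope classical_set_scope.
Local Open Scope ring_scope.

Section Dot.
Variables (R : realType) (d : nat).
Implicit Types u v w : 'rV[R]_d.

Lemma dotvD u v w : dotv u (v + w) = dotv u v + dotv u w.
Proof. by rewrite /dotv -big_split; apply: eq_bigr => i _; rewrite !mxE mulrDr. Qed.
Lemma dotvB u v w : dotv u (v - w) = dotv u v - dotv u w.
Proof. by rewrite /dotv -sumrB; apply: eq_bigr => i _; rewrite !mxE mulrBr. Qed.
Lemma dotvZ u (a : R) v : dotv u (a *: v) = a * dotv u v.
Proof. by rewrite /dotv mulr_sumr; apply: eq_bigr => i _; rewrite !mxE mulrCA. Qed.

Lemma dotv_ge0 u : 0 <= dotv u u.
Proof. by apply: sumr_ge0 => i _; rewrite -expr2 sqr_ge0. Qed.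

Lemma cs_sq u v : dotv u v ^+ 2 <= dotv u u * dotv v v.
Proof.
set A := dotv u u; set B := dotv v v; set C := dotv u v.
have A0 : 0 <= A := dotv_ge0 u.
have key : forall t : R, 0 <= t ^+ 2 * A - 2 * t * C + B.
  move=> t.
  have -> : t ^+ 2 * A - 2 * t * C + B =
            \sum_(i < d) (t * u 0 i - v 0 i) ^+ 2.
    rewrite /A /B /C /dotv !mulr_sumr -sumrB -big_split /=.
    by apply: eq_bigr => i _ /=; ring.
  by apply: sumr_ge0 => i _; rewrite sqr_ge0.
have [Az|Ap] := eqVneq A 0.
  have ui : forall i, u 0 i = 0.
    move=> i; have ge j : 0 <= u 0 j * u 0 j by rewrite -expr2 sqr_ge0.
    have h := @psumr_eq0P R 'I_d xpredT (fun i => u 0 i * u 0 i)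
      (fun j _ => ge j) Az i isT.
    by move/eqP: h; rewrite mulf_eq0 orbb => /eqP.
  have -> : C = 0 by rewrite /C /dotv big1 // => i _; rewrite ui mul0r.
  by rewrite expr0n /= mulr_ge0 // dotv_ge0.
have Apos : 0 < A by rewrite lt_def Ap A0.
have := key (C / A).
have -> : (C / A) ^+ 2 * A - 2 * (C / A) * C + B = B - C ^+ 2 / A.
  by field; rewrite gt_eqF.
rewrite subr_ge0 ler_pdivrMr // => h; by rewrite mulrC.
Qed.

Lemma cs_low u v : - (vnorm u * vnorm v) <= dotv u v.
Proof.
rewrite /vnorm -sqrtrM ?dotv_ge0 // lerNl.
apply: le_trans (ler_norm _) _.
rewrite -(sqrtr_sqr (- dotv u v)) ler_sqrt; last by rewrite mulr_ge0 ?dotv_ge0.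
by rewrite sqrrN cs_sq.
Qed.
Lemma cs_up u v : dotv u v <= vnorm u * vnorm v.
Proof.
rewrite /vnorm -sqrtrM ?dotv_ge0 //.
apply: le_trans (ler_norm _) _.
rewrite -(sqrtr_sqr (dotv u v)) ler_sqrt; last by rewrite mulr_ge0 ?dotv_ge0.
by rewrite cs_sq.
Qed.
End Dot.

Section Integ.
Variables (dm : measure_display) (Omega : measurableType dm) (R : realType).
Variable P : probability Omega R.
Definition RI (f : Omega -> R) := P.-integrable setT (EFin \o f).

Lemma RI_add f g : RI f -> RI g -> RI (fun w => f w + g w).
Proof.
move=> hf hg; apply: eq_integrable (integrableD _ hf hg) => //= x _.
Qed.
Lemma RI_scale (k : R) f : RI f -> RI (fun w => k * f w).
Proof.
move=> hf; apply: eq_integrable (integrableZl _ k hf) => //= x _.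
Qed.
Lemma RI_sub f g : RI f -> RI g -> RI (fun w => f w - g w).
Proof.
move=> hf hg; apply: eq_integrable (integrableB _ hf hg) => //= x _.
Qed.
Lemma RI_cst (k : R) : RI (fun _ => k).
Proof. exact: finite_measure_integrable_cst. Qed.

Lemma RI_sum (I : Type) (s : seq I) (F : I -> Omega -> R) :
  (forall i, RI (F i)) ->
  RI (fun w => \sum_(i <- s) F i w) /\
  \int[P]_w (\sum_(i <- s) F i w) = \sum_(i <- s) \int[P]_w (F i w).
Proof.
move=> hF; elim: s => [|a s [IH1 IH2]].
  split.
    by apply: eq_integrable (RI_cst 0) => //= x _; rewrite big_nil.
  rewrite big_nil (@eq_Rintegral _ _ _ P _ (fun w => 0)); last by move=> x _; rewrite big_nil.
  by rewrite Rintegral_cst // mul0r.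
have e : forall w, \sum_(i <- a :: s) F i w = F a w + \sum_(i <- s) F i w.
  by move=> w; rewrite big_cons.
split.
  have h2 := RI_add _ _ (hF a) IH1. rewrite /RI in h2 *. apply: eq_integrable h2 => //= x _; by rewrite e.
rewrite (@eq_Rintegral _ _ _ P _ (fun w => F a w + \sum_(i <- s) F i w)); last by move=> x _; rewrite e.
by rewrite RintegralD // ?IH2 ?big_cons //; exact: hF.
Qed.

Lemma jensen_exp (Y : Omega -> R) : RI Y ->
  ((expR (\int[P]_w Y w))%:E <= \int[P]_w (expR (Y w))%:E)%E.
Proof.
move=> hY; set m := \int[P]_w Y w.
have mY : measurable_fun setT Y.
  by case/integrableP: hY => /measurable_EFinP.
have mE : measurable_fun setT (fun w => (expR (Y w))%:E).
  apply/measurable_EFinP.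
  exact: (measurableT_comp (@measurable_expR R) mY).
pose L w := expR m * (Y w + (1 - m)).
have hL : RI L by apply: RI_scale; apply: RI_add => //; exact: RI_cst.
have IL : \int[P]_w L w = expR m.
  rewrite /L RintegralZl //; last by apply: RI_add => //; exact: RI_cst.
  rewrite RintegralD //; last exact: RI_cst.
  rewrite Rintegral_cst //.
  have -> : fine (P setT) = 1 by rewrite (probability_setT P).
  rewrite mulr1 -/m.
  by rewrite addrC subrK mulr1.
have [hE|hE] := pselect (P.-integrable setT (fun w => (expR (Y w))%:E)).
  have fin : (\int[P]_w (L w)%:E)%E \is a fin_num by apply: integrable_fin_num.
  rewrite -IL /Rintegral (fineK fin).
  apply: le_integral => // x _; rewrite lee_fin /L.
  have -> : Y x = m + (Y x - m) by rewrite addrC subrK.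
  rewrite expRD ler_pM2l ?expR_gt0 //.
  apply: le_trans (expR_ge1Dx (Y x - m)); lra.
have inf : (\int[P]_w (expR (Y w))%:E = +oo)%E.
  apply/eqP; rewrite eq_le leey /=; rewrite leNgt; apply/negP => lt.
  apply: hE; apply/integrableP; split => //.
  under eq_integral do rewrite gee0_abs ?lee_fin ?expR_ge0 //.
  exact: lt.
by rewrite inf leey.
Qed.
End Integ.

Theorem proposition2 (R : realType) (d : nat) (H : finType) (T : nat)
    (hist : 'I_T -> H) (dm : measure_display) (Omega : measurableType dm)
    (P : probability Omega R) (qs : nat -> Omega -> 'rV[R]_d)
    (X : nat -> Omega -> H) (Bq eta : R) (mu0 : 'rV[R]_d)
    (q : 'rV[R]_d) (Nhat : nat) (h h' : H) (r_h r_h' : 'rV[R]_d) (xi : R) :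
  (0 < d)%N ->
  (forall g : H, (0 < cnt hist g)%N) ->
  0 < eta ->
  training_setup hist P qs X Bq ->
  (1 <= Nhat)%N ->
  (forall (g : H) (i : 'I_d),
      P.-integrable setT (fun w => (sgd hist qs X eta mu0 Nhat w g 0 i)%:E)) ->
  0 <= xi -> vnorm r_h <= xi -> vnorm r_h' <= xi ->
  Emu hist P qs X eta mu0 Nhat h =
    mu0 + (eta * Nhat%:R * pfreq R hist h / Num.sqrt d%:R) *:
            (wvec P qs X h - wbar hist P qs X) + r_h ->
  Emu hist P qs X eta mu0 Nhat h' =
    mu0 + (eta * Nhat%:R * pfreq R hist h' / Num.sqrt d%:R) *:
            (wvec P qs X h' - wbar hist P qs X) + r_h' ->
  (AR hist P qs X eta mu0 Nhat q h h' >=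
   (expR (eta * Nhat%:R / d%:R *
            dotv q (pfreq R hist h *: (wvec P qs X h - wbar hist P qs X)
                    - pfreq R hist h' *: (wvec P qs X h' - wbar hist P qs X))
          - 2 * xi * vnorm q / Num.sqrt d%:R))%:E)%E.
Proof.
move=> d0 cnt0 eta0 _ _ hint xi0 rh rh' Eh Eh'.
set s := Num.sqrt d%:R.
have s0 : 0 < s by rewrite sqrtr_gt0 ltr0n.
set mu := fun w => sgd hist qs X eta mu0 Nhat w.
pose Y w := dotv q (mu w h - mu w h') / s.
pose c : R := (cnt hist h)%:R / (cnt hist h')%:R.
have ch0 : 0 < (cnt hist h)%:R :> R by rewrite ltr0n.
have ch'0 : 0 < (cnt hist h')%:R :> R by rewrite ltr0n.
have c0 : 0 < c by rewrite divr_gt0.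
have ratio : forall w, exposure hist q (mu w) h / exposure hist q (mu w) h' = c * expR (Y w).
  move=> w; rewrite /exposure.
  set S := \sum_(g : H) _.
  have en : forall g, 0 < expo_num hist q (mu w) g.
    by move=> g; rewrite /expo_num mulr_gt0 ?expR_gt0 // ltr0n.
  have S0 : 0 < S.
    rewrite /S (bigD1 h) //= ltr_pwDl ?en //.
    by apply: sumr_ge0 => g _; apply: ltW.
  have -> : expo_num hist q (mu w) h / S / (expo_num hist q (mu w) h' / S) =
            expo_num hist q (mu w) h / expo_num hist q (mu w) h'.
    by field; rewrite !gt_eqF // en.
  rewrite /expo_num /Y /c dotvB mulrBl expRB.
  field; rewrite !gt_eqF ?expR_gt0 //.
have pc : (pfreq R hist h / pfreq R hist h') = c.
  have T0 : T%:R != 0 :> R.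
    rewrite pnatr_eq0 -lt0n; move: (cnt0 h); rewrite /cnt => hh.
    by have := leq_trans hh (max_card _); rewrite card_ord.
  rewrite /pfreq /c; field; rewrite T0 /= gt_eqF //.
have hI : forall g i, @RI _ _ _ P (fun w => mu w g 0 i) by move=> g i; exact: hint.
pose F i w := (q 0 i / s) * (mu w h 0 i - mu w h' 0 i).
have FI : forall i, @RI _ _ _ P (F i).
  by move=> i; apply: RI_scale; apply: RI_sub; apply: hI.
have Ysum : forall w, Y w = \sum_(i <- index_enum 'I_d) F i w.
  move=> w; rewrite /Y /dotv mulr_suml; apply: eq_bigr => i _; rewrite !mxE /F.
  by field; rewrite gt_eqF.
have [YI0 YE0] := @RI_sum _ _ _ P _ (index_enum 'I_d) F FI.
have YI : @RI _ _ _ P Y.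
  by rewrite /RI; apply: eq_integrable YI0 => //= x _; rewrite Ysum.
have YE : \int[P]_w Y w = dotv q (Emu hist P qs X eta mu0 Nhat h - Emu hist P qs X eta mu0 Nhat h') / s.
  rewrite (@eq_Rintegral _ _ _ P _ (fun w => \sum_(i <- index_enum 'I_d) F i w)); last by move=> x _; rewrite Ysum.
  rewrite YE0 /dotv mulr_suml; apply: eq_bigr => i _.
  rewrite /F RintegralZl //; last by apply: RI_sub; apply: hI.
  rewrite RintegralB //; try apply: hI.
  by rewrite !mxE /mu; field; rewrite gt_eqF.
have mE : measurable_fun setT (fun w => (expR (Y w))%:E).
  case/integrableP: YI => /measurable_EFinP mY _.
  apply/measurable_EFinP; exact: (measurableT_comp (@measurable_expR R) mY).
have AReq : AR hist P qs X eta mu0 Nhat q h h' = (\int[P]_w (expR (Y w))%:E)%E.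
  rewrite /AR pc unlock /=.
  rewrite (eq_integral (fun w => c%:E * (expR (Y w))%:E)%E); last first.
    by move=> w _; rewrite -EFinM; have := ratio w; rewrite /mu => ->.
  rewrite ge0_integralZl_EFin //; last by rewrite ltW.
    by rewrite muleAC -EFinM divrr ?unitfE ?(gt_eqF c0) // mul1e.
rewrite AReq; apply: (le_trans _ (@jensen_exp _ _ _ P Y YI)).
rewrite lee_fin ler_expR YE Eh Eh'.
rewrite !(dotvB, dotvD, dotvZ).
have nq0 : 0 <= vnorm q by apply: sqrtr_ge0.
have b1 := @cs_low _ _ q r_h.
have b2 := @cs_up _ _ q r_h'.
have b1' : - (vnorm q * xi) <= dotv q r_h.
  apply: le_trans b1; rewrite lerN2; exact: ler_wpM2l.
have b2' : dotv q r_h' <= vnorm q * xi.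
  apply: le_trans b2 _; exact: ler_wpM2l.
have sd : d%:R = s * s by rewrite /s -expr2 sqr_sqrtr // ler0n.
rewrite -/s sd.
set W := dotv q (wvec P qs X h).
set W' := dotv q (wvec P qs X h').
set B := dotv q (wbar hist P qs X).
set M := dotv q mu0.
set Rh := dotv q r_h.
set Rh' := dotv q r_h'.
set ph := pfreq R hist h. set ph' := pfreq R hist h'.
have -> : (M + eta * Nhat%:R * ph / s * (W - B) + Rh -
     (M + eta * Nhat%:R * ph' / s * (W' - B) + Rh')) / s =
   eta * Nhat%:R / (s * s) * (ph * (W - B) - ph' * (W' - B)) + (Rh - Rh') / s.
  by field; rewrite gt_eqF.
rewrite lerD2l.
rewrite -mulNr ler_pM2r ?invr_gt0 //.
move: b1' b2'; rewrite -/Rh -/Rh' (mulrC (vnorm q)). lra.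
Qed.
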